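(* Let $A=(a(x),dF(x))$ and $B=(b(x),dF(x))$ be games and $p\in[0,1]$. If $g(p)$ exists, then $f(p)\le g(p)$.
   Context: A game is a pair $(a(x),dF(x))$ with $dF$ a probability measure on $\mathbb{R}$ and $a\ge0$ measurable with finite positive integral. A real $r$ is fixed; $\exp(-\infty)=0$. For $p\in[0,1]$ put $c_p(x):=pa(x)+(1-p)b(x)$ and $f(p):=\exp(\int\log c_p(x)\,dF(x))/e^r$. $g(p)$ denotes the value $u>0$ such that for some $t_u$ (with $0<t_u\le1$) the system $\exp\big(\int\log(\frac{c_p(x)}{u}t_u-t_u+1)\,dF(x)\big)=e^r$, $\int\frac{c_p(x)-u}{c_p(x)t_u-ut_u+u}\,dF(x)=0$ holds; when such a solution exists it is unique, and ''$g(p)$ exists'' means such a solution exists. *)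

(* Defs.v *)
From HB Require Import structures.
From mathcomp Require Import all_boot all_order all_algebra.
From mathcomp Require Import all_classical all_reals all_analysis.
Set Implicit Arguments. Unset Strict Implicit. Unset Printing Implicit Defensive.
Import Order.TTheory GRing.Theory Num.Theory.
Local Open Scope ring_scope.
Local Open Scope classical_set_scope.

(* log with the convention log 0 = -oo (only applied to nonnegative arguments) *)
Definition elog {R : realType} (x : R) : \bar R :=
  if 0 < x then (ln x)%:E else -oo%E.

(* A game (a(x), dF(x)): dF = P a probability measure on the Borel sets of R,
   a >= 0 measurable with finite positive integral. *)
Definition is_game {R : realType} (P : probability (measurableTypeR R) R)
    (a : measurableTypeR R -> R) : Prop :=
  [/\ measurable_fun setT a,
      (forall x, 0 <= a x),
      P.-integrable setT (EFin \o a) &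
      (0 < \int[P]_x (a x)%:E)%E].

Definition cp {R : realType} (a b : measurableTypeR R -> R) (p : R)
    (x : measurableTypeR R) : R :=
  p * a x + (1 - p) * b x.

Definition fval {R : realType} (P : probability (measurableTypeR R) R)
    (a b : measurableTypeR R -> R) (r p : R) : \bar R :=
  (expeR (\int[P]_x elog (cp a b p x)) * ((expR r)^-1)%:E)%E.

(* (u, t_u) solves the system defining g(p) *)
Definition g_system {R : realType} (P : probability (measurableTypeR R) R)
    (a b : measurableTypeR R -> R) (r p u t : R) : Prop :=
  [/\ 0 < u, 0 < t <= 1,
      expeR (\int[P]_x elog (cp a b p x / u * t - t + 1)) = (expR r)%:E &
      (\int[P]_x ((cp a b p x - u) / (cp a b p x * t - u * t + u))%:E = 0)%E].

(* Main.v *)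
Require Import Defs.
From HB Require Import structures.
From mathcomp Require Import all_boot all_order all_algebra.
From mathcomp Require Import all_classical all_reals all_analysis.
From mathcomp Require Import measurable_realfun.
From mathcomp Require Import ring lra.
Import Order.TTheory GRing.Theory Num.Theory.
Local Open Scope ring_scope.
Local Open Scope classical_set_scope.

Section aux.
Context d (T : measurableType d) (R : realType) (mu : {measure set T -> \bar R}).
Local Open Scope ereal_scope.

Lemma my_le_integral (f g : T -> \bar R) :
  measurable_fun setT f -> measurable_fun setT g ->
  (forall x, f x <= g x) -> \int[mu]_x f x <= \int[mu]_x g x.
Proof.
move=> mf mg fg; rewrite integralE [leRHS]integralE leeB//.
- apply: ge0_le_integral => //.
  + exact: measurable_funepos.
  + exact: measurable_funepos.
  + by move=> x _; apply: (@funepos_le _ _ setT) => [y _|]; [exact: fg|exact: in_setT].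
- apply: ge0_le_integral => //.
  + exact: measurable_funeneg.
  + exact: measurable_funeneg.
  + by move=> x _; apply: (@funeneg_le _ _ setT) => [y _|]; [exact: fg|exact: in_setT].
Qed.

Lemma fin_integrable (f : T -> \bar R) :
  measurable_fun setT f -> \int[mu]_x f x \is a fin_num ->
  mu.-integrable setT f.
Proof.
move=> mf; rewrite integralE => hfin; apply/integrableP; split => //.
have -> : (fun x => `|f x|) = f^\+ \+ f^\- by rewrite -fune_abse.
rewrite ge0_integralD//; last 2 first.
- exact: measurable_funepos.
- exact: measurable_funeneg.
have h1 : 0 <= \int[mu]_x f^\+ x by apply: integral_ge0 => x _; exact: funepos_ge0.
have h2 : 0 <= \int[mu]_x f^\- x by apply: integral_ge0 => x _; exact: funeneg_ge0.
move: hfin h1 h2.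
case: (\int[mu]_x f^\+ x) => [x| |]; case: (\int[mu]_x f^\- x) => [y| |] //=.
by move=> _ _ _; rewrite ltry.
Qed.

Lemma measurable_elog (g : T -> R) : measurable_fun setT g ->
  measurable_fun setT (fun x => elog (g x)).
Proof.
move=> mg; rewrite /elog; apply: measurable_fun_ifT.
- by apply: measurable_fun_ltr => //; exact: measurable_cst.
- by apply/measurable_EFinP; exact: measurableT_comp.
- exact: measurable_cst.
Qed.

End aux.

Lemma ptwise (R : realType) (c u t : R) : 0 < c -> 0 < u -> 0 < t <= 1 ->
  ln c <= ln u + ln (c / u * t - t + 1) + (1 - t) * ((c - u) / (c * t - u * t + u)).
Proof.
move=> c0 u0 /andP[t0 t1].
set D := c * t - u * t + u.
have D0 : 0 < D by rewrite /D; nra.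
have -> : c / u * t - t + 1 = D / u by rewrite /D; field; rewrite gt_eqF.
rewrite ln_div ?posrE // addrCA subrr addr0.
rewrite -lerBlDl -ln_div ?posrE //.
have -> : c / D = 1 + (c / D - 1) by rewrite addrCA subrr addr0.
apply: le_trans (le_ln1Dx _) _.
  by rewrite ltrBrDl subrr divr_gt0.
rewrite le_eqVlt; apply/orP; left; apply/eqP.
rewrite /D; field; rewrite -/D gt_eqF //.
Qed.

Lemma ptwiseE (R : realType) (c u t : R) : 0 <= c -> 0 < u -> 0 < t <= 1 ->
  (elog c <= (ln u)%:E + elog (c / u * t - t + 1) + ((1 - t) * ((c - u) / (c * t - u * t + u)))%:E)%E.
Proof.
move=> c0 u0 /andP[t0 t1]; rewrite /elog.
case: ifPn => cp; last by rewrite leNye.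
have zp : 0 < c / u * t - t + 1.
  have -> : c / u * t - t + 1 = (c * t + u * (1 - t)) / u by field; rewrite gt_eqF.
  by apply: divr_gt0 => //; nra.
rewrite zp -!EFinD lee_fin; apply: ptwise => //; exact/andP.
Qed.

Theorem lemmaD6 (R : realType) (P : probability (measurableTypeR R) R)
    (a b : measurableTypeR R -> R) (r p : R) :
  is_game P a -> is_game P b -> 0 <= p <= 1 ->
  forall u t : R, g_system P a b r p u t ->
  (fval P a b r p <= u%:E)%E.
Proof.
move=> [ma a0 _ _] [mb b0 _ _] /andP[p0 p1] u t [u0 /andP[t0 t1] hr hh].
set C := cp a b p.
have C0 x : 0 <= C x by rewrite /C /cp; apply: addr_ge0; apply: mulr_ge0 => //; rewrite subr_ge0.
have mC : measurable_fun setT C.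
  by apply: measurable_funD; apply: measurable_funM => //; exact: measurable_cst.
pose Z x := C x / u * t - t + 1.
have mZ : measurable_fun setT Z.
  apply: measurable_funD; last exact: measurable_cst.
  apply: measurable_funB; last exact: measurable_cst.
  by apply: measurable_funM; [apply: measurable_funM|]; first exact: mC; exact: measurable_cst.
pose H x := (C x - u) / (C x * t - u * t + u).
have mH : measurable_fun setT H.
  have -> : H = (fun x => if 0 < C x * t - u * t + u then
                 (C x - u) * expR (- ln (C x * t - u * t + u)) else 0).
    apply/funext => x; rewrite /H; case: ifPn => hp.
      by rewrite expRN lnK.
    have -> : C x * t - u * t + u = 0.
      rewrite -leNgt in hp; apply/eqP; rewrite eq_le hp /=.
      have := C0 x; nra.
    by rewrite invr0 mulr0.
  apply: measurable_fun_ifT.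
  - apply: measurable_fun_ltr; first exact: measurable_cst.
    apply: measurable_funD; last exact: measurable_cst.
    apply: measurable_funB; last exact: measurable_cst.
    by apply: measurable_funM => //; exact: measurable_cst.
  - apply: measurable_funM.
      by apply: measurable_funB => //; exact: measurable_cst.
    apply: measurableT_comp => //; apply: measurableT_comp => //.
    apply: measurableT_comp => //.
    apply: measurable_funD; last exact: measurable_cst.
    apply: measurable_funB; last exact: measurable_cst.
    by apply: measurable_funM => //; exact: measurable_cst.
  - exact: measurable_cst.
have mEZ : measurable_fun setT (fun x => elog (Z x)) by apply: measurable_elog.
have hr' : (\int[P]_x elog (Z x) = r%:E)%E.
  by apply: expeR_inj; rewrite hr.
have iZ : P.-integrable setT (fun x => elog (Z x)).
  by apply: fin_integrable => //; rewrite hr'.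
have iH : P.-integrable setT (EFin \o H).
  apply: fin_integrable; first exact/measurable_EFinP.
  by rewrite /= hh.
have iC : P.-integrable setT (fun x => (ln u)%:E).
  have := @finite_measure_integrable_cst _ _ _ P setT (ln u) measurableT.
  by apply: eq_integrable.
pose G x := ((ln u)%:E + elog (Z x) + ((1 - t) * H x)%:E)%E.
have FG : (\int[P]_x elog (C x) <= \int[P]_x G x)%E.
  apply: my_le_integral.
  - exact: measurable_elog.
  - rewrite /G; apply: emeasurable_funD.
      apply: emeasurable_funD => //.
      idtac.
    apply/measurable_EFinP; apply: measurable_funM => //; exact: measurable_cst.
  - move=> x; rewrite /G /Z /H; apply: ptwiseE => //; exact/andP.
have iH' : P.-integrable setT (fun x => ((1 - t) * H x)%:E).
  apply: (eq_integrable measurableT _ _ _ (integrableZl measurableT (1-t) iH)).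
  by move=> x _ /=; rewrite EFinM.
have iCZ := integrableD measurableT iC iZ.
have hh' : (\int[P]_x (EFin \o H) x = 0)%E := hh.
have GE : (\int[P]_x G x = (ln u + r)%:E)%E.
  rewrite /G (integralD measurableT iCZ iH') (integralD measurableT iC iZ) hr'.
  have -> : (\int[P]_x ((1 - t) * H x)%:E = (1 - t)%:E * \int[P]_x (EFin \o H) x)%E.
    rewrite -(integralZl measurableT iH); apply: eq_integral => x _.
    by rewrite EFinM.
  rewrite hh' mule0 adde0.
  rewrite integral_cst //.
  set m := (X in ((_ * X) + _)%E = _).
  have -> : m = 1%E by rewrite /m; exact: probability_setT.
  by rewrite mule1 -EFinD.
rewrite /fval.
have h : (expeR (\int[P]_x elog (C x)) <= expeR ((ln u + r)%:E))%E.
  by rewrite lee_expeR -GE.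
apply: le_trans (lee_wpmul2r _ h) _.
  by rewrite lee_fin invr_ge0 expR_ge0.
rewrite /= -EFinM lee_fin expRD lnK ?posrE // mulfK //.
by rewrite gt_eqF // expR_gt0.
Qed.
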